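(* The halved Farey graph $\check F$ contains the Farey graph as a minor with finite branch sets.
   Context: Graphs are simple and may be infinite. The halved Farey graph of order $0$, $\check F_0$, is a $K^2$ whose single edge is coloured blue. Inductively, $\check F_{n+1}$ is the edge-coloured graph obtained from $\check F_n$ by adding, for every blue edge $e$ of $\check F_n$, a new vertex $v_e$ joined precisely to the two endvertices of $e$ by two blue edges, and recolouring all edges of $\check F_n\subseteq \check F_{n+1}$ black. The halved Farey graph is $\check F:=\bigcup_{n\in\mathbb{N}}\check F_n$ (forgetting colours). The Farey graph is the graph with vertex set $\mathbb{Q}\cup\{\infty\}$ in which two rationals $a/b$ and $c/d$ written in lowest terms (allowing $\infty=(\pm1)/0$) are adjacent if and only if $ad-bc=\pm1$; equivalently (up to isomorphism) it is the union $G_1\cup G_2$ of two copies $G_1,G_2$ of $\check F$ with $G_1\cap G_2=\check F_0$. A graph $H$ is a minor of $G$ if there are pairwise disjoint non-empty vertex sets $V_h\subseteq V(G)$ ($h\in V(H)$), each inducing a connected subgraph of $G$ (the branch sets), such that for every edge $hh'$ of $H$ there is an edge of $G$ between $V_h$ and $V_{h'}$. *)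

(* Defs.v *)
From mathcomp Require Import all_boot all_algebra.
From Stdlib Require List.
Set Implicit Arguments. Unset Strict Implicit. Unset Printing Implicit Defensive.
Import GRing.Theory Num.Theory.

Definition finite_set (V : Type) (B : V -> Prop) : Prop :=
  exists s : list V, forall x, B x -> List.In x s.

Inductive walk_in (V : Type) (adj : V -> V -> Prop) (B : V -> Prop) : V -> V -> Prop :=
| walk_refl x : B x -> walk_in adj B x x
| walk_step x y z : B x -> adj x y -> walk_in adj B y z -> walk_in adj B x z.

Definition connected_in (V : Type) (adj : V -> V -> Prop) (B : V -> Prop) : Prop :=
  forall x y, B x -> B y -> walk_in adj B x y.

Definition minor_finite_branch (VH : Type) (adjH : VH -> VH -> Prop)
    (VG : Type) (adjG : VG -> VG -> Prop) : Prop :=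
  exists branch : VH -> VG -> Prop,
    [/\ (forall h, exists x, branch h x),
        (forall h, finite_set (branch h)),
        (forall h h' x, h <> h' -> branch h x -> branch h' x -> False),
        (forall h, connected_in adjG (branch h)) &
        (forall h h', adjH h h' ->
           exists x y, [/\ branch h x, branch h' y & adjG x y])].

(* Vertices: Q ∪ {∞}, with None = ∞ = 1/0.  For rationals in lowest terms
   a/b, c/d (denq > 0), adjacency iff ad - bc = ±1; ∞ = 1/0 is adjacent to
   c/d iff d = ±1. *)
Local Open Scope ring_scope.
Definition farey_det (p q : option rat) : int :=
  match p, q with
  | None, None => 0
  | None, Some q => denq q
  | Some p, None => - denq p
  | Some p, Some q => numq p * denq q - denq p * numq q
  end.

Definition farey_adj (p q : option rat) : Prop :=
  farey_det p q = 1 \/ farey_det p q = -1.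
Local Close Scope ring_scope.

(* Vertices: the two vertices of F_0 (hbase false, hbase true), and one vertex
   hmid w for each blue edge ever created, blue edges being indexed by binary
   words w (most recent choice first): the initial edge is [::], and the blue
   edge w with new vertex v_w = hmid w gives rise to the two new blue edges
   (false :: w) = {x, v_w} and (true :: w) = {v_w, y}, where w = {x, y}. *)
Inductive hvert : Type :=
| hbase of bool
| hmid of seq bool.

Fixpoint hends (w : seq bool) : hvert * hvert :=
  match w with
  | [::] => (hbase false, hbase true)
  | c :: w' => let (x, y) := hends w' in
               if c then (hmid w', y) else (x, hmid w')
  end.

(* Every edge of the halved Farey graph was blue at the stage it was added,
   so the edge set of F̌ = ⋃ F̌_n is exactly { hends w }. *)
Definition hfarey_adj (u v : hvert) : Prop :=
  exists w : seq bool, hends w = (u, v) \/ hends w = (v, u).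

(* Main.v *)
Require Import Defs.
From mathcomp Require Import all_boot all_algebra.
From mathcomp Require Import all_order zify ring.
Set Implicit Arguments. Unset Strict Implicit. Unset Printing Implicit Defensive.

Definition padd (p q : nat * nat) : nat * nat := (p.1 + q.1, p.2 + q.2)%N.

Fixpoint Efrom (L R : nat * nat) (W : seq bool) : (nat * nat) * (nat * nat) :=
  match W with
  | [::] => (L, R)
  | c :: W' => if c then Efrom (padd L R) R W' else Efrom L (padd L R) W'
  end.

Definition midp L R W := padd (Efrom L R W).1 (Efrom L R W).2.

Fixpoint sb (W : seq bool) : nat * nat :=
  match W with
  | [::] => (1, 1)%N
  | c :: W' => let p := sb W' in if c then (p.1, p.1 + p.2)%N else (p.1 + p.2, p.2)%N
  end.

Lemma midp_gen W : forall L R,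
  midp L R W = ((sb W).1 * L.1 + (sb W).2 * R.1, (sb W).1 * L.2 + (sb W).2 * R.2)%N.
Proof.
elim: W => [|c W IH] L R; first by rewrite /midp /= !mul1n.
rewrite /midp /=; case: c; rewrite -/(midp _ _ _) IH /=;
  congr pair; rewrite /padd /=; nia.
Qed.

Lemma midp_sb W : midp (1, 0)%N (0, 1)%N W = sb W.
Proof. rewrite midp_gen; case: (sb W) => a b /=; congr pair; lia. Qed.

Lemma sb_pos W : (0 < (sb W).1)%N /\ (0 < (sb W).2)%N.
Proof. elim: W => [|[] W [IH1 IH2]] //=; lia. Qed.

Lemma sb_coprime W : coprime (sb W).1 (sb W).2.
Proof.
elim: W => [|[] W IH] //=; rewrite /coprime in IH *.
  by rewrite gcdnDl.
by rewrite gcdnC addnC gcdnDl gcdnC.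
Qed.

Lemma sb_inj W1 W2 : sb W1 = sb W2 -> W1 = W2.
Proof.
elim: W1 W2 => [|c1 W1 IH] [|c2 W2] //=.
- have := sb_pos W2; case: c2 => /= [[h1 h2]|[h1 h2]] [e1 e2]; lia.
- have := sb_pos W1; case: c1 => /= [[h1 h2]|[h1 h2]] [e1 e2]; lia.
- move=> e; congr cons.
  + move: e; have := sb_pos W1; have := sb_pos W2.
    case: (sb W1) => p q; case: (sb W2) => p' q'.
    by case: c1; case: c2 => //=; move=> [h1 h2] [h3 h4] [e1 e2]; lia.
  + apply: IH; move: e; have := sb_pos W1; have := sb_pos W2.
    case: (sb W1) => p q; case: (sb W2) => p' q'.
    by case: c1; case: c2 => /=; move=> [h1 h2] [h3 h4] [e1 e2]; congr pair; lia.
Qed.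

Lemma sb_surj n : forall a b, (a + b <= n)%N -> (0 < a)%N -> (0 < b)%N -> coprime a b ->
  exists W, sb W = (a, b).
Proof.
elim: n => [|n IH] a b hn ha hb hc; first by move: hn ha; rewrite leqn0 addn_eq0 => /andP[/eqP -> _].
case: (ltngtP a b) => hab.
- have hc' : coprime a (b - a) by rewrite /coprime -gcdnDl (subnKC (ltnW hab)).
  have h1 : (a + (b - a) <= n)%N by move: hn ha hab; clear hc hc' IH; lia.
  have h2 : (0 < b - a)%N by rewrite subn_gt0.
  have [W hW] := IH a (b - a)%N h1 ha h2 hc'.
  exists (true :: W) => /=; rewrite hW /=; congr pair; apply: subnKC; exact: ltnW.
- have hc' : coprime (a - b) b by rewrite /coprime gcdnC -gcdnDl (subnKC (ltnW hab)) gcdnC.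
  have h1 : ((a - b) + b <= n)%N by move: hn hb hab; clear hc hc' IH; lia.
  have h2 : (0 < a - b)%N by rewrite subn_gt0.
  have [W hW] := IH (a - b)%N b h1 h2 hb hc'.
  exists (false :: W) => /=; rewrite hW /=; congr pair; apply: subnK; exact: ltnW.
- subst b; move: hc; rewrite /coprime gcdnn => /eqP ->; by exists [::].
Qed.

Lemma Efrom_rcons W c : forall L R, Efrom L R (rcons W c) =
  (if c then (padd (Efrom L R W).1 (Efrom L R W).2, (Efrom L R W).2)
   else ((Efrom L R W).1, padd (Efrom L R W).1 (Efrom L R W).2)).
Proof. elim: W => [|d W IH] L R /=; first by case: c. by case: d; rewrite IH. Qed.

Lemma trich a b c d : (a * d = b * c + 1)%N -> ((c <= a /\ d <= b) \/ (a <= c /\ b <= d) \/ (b = 0 /\ c = 0))%N.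
Proof.
move=> he.
case: (leqP c a) => h1; case: (leqP d b) => h2.
- by left.
- right. case: (ltnP c a) => h3.
  + right. nia.
  + left. nia.
- exfalso. nia.
- right; left; split; apply: ltnW => //.
Qed.

Lemma edge_exists n : forall a b c d, (a + b + c + d <= n)%N -> (a * d = b * c + 1)%N ->
  exists W, Efrom (1, 0)%N (0, 1)%N W = ((a, b), (c, d)).
Proof.
elim: n => [|n IH] a b c d hn he.
  exfalso; move: hn he; rewrite !leqn0 !addn_eq0 => /andP[/andP[/andP[/eqP -> _] _] _].
  by rewrite mul0n addn1.
have [[h1 h2]|[[h1 h2]|[h1 h2]]] := trich he.
- have hcd : (0 < c + d)%N.
    case: c d he {hn h1 h2} => [|c] [|d] //; by rewrite muln0 addn1.
  have e1 : ((a - c) * d = (b - d) * c + 1)%N.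
    have k1 : (c * d <= a * d)%N by rewrite leq_mul2r h1 orbT.
    have k2 : (d * c <= b * c)%N by rewrite leq_mul2r h2 orbT.
    rewrite !mulnBl; lia.
  have hn' : ((a - c) + (b - d) + c + d <= n)%N by move: hn hcd h1 h2; clear IH he e1; lia.
  have [W hW] := IH (a - c) (b - d) c d hn' e1.
  exists (rcons W true); rewrite Efrom_rcons hW /padd /=; congr pair; congr pair; [exact: subnK|exact: subnK].
- have hab : (0 < a + b)%N.
    case: a b he {hn h1 h2} => [|a] [|b] //; by rewrite mul0n addn1.
  have e1 : (a * (d - b) = b * (c - a) + 1)%N.
    have k1 : (a * b <= a * d)%N by rewrite leq_mul2l h2 orbT.
    have k2 : (b * a <= b * c)%N by rewrite leq_mul2l h1 orbT.
    rewrite !mulnBr; lia.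
  have hn' : (a + b + (c - a) + (d - b) <= n)%N by move: hn hab h1 h2; clear IH he e1; lia.
  have [W hW] := IH a b (c - a) (d - b) hn' e1.
  exists (rcons W false); rewrite Efrom_rcons hW /padd /=; congr pair; congr pair; [exact: subnKC|exact: subnKC].
- move: h1 h2 he => -> -> /=; rewrite muln0 add0n => /eqP; rewrite muln_eq1 => /andP[/eqP -> /eqP ->].
  by exists [::].
Qed.

Import Order.TTheory GRing.Theory Num.Theory.
Local Open Scope ring_scope.


Definition tovP (p : nat * nat) : option rat :=
  if p.1 == 0%N then None else Some ((p.2)%:R / (p.1)%:R).
Definition tovN (p : nat * nat) : option rat :=
  if p.2 == 0%N then None else Some (- (p.1)%:R / (p.2)%:R).

Definition fmap (x : hvert) : option (option rat) :=
  match x with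
  | hbase _ => Some (Some 0)
  | hmid w => match rev w with
    | [::] => Some None
    | true :: W => Some (tovN (sb W))
    | [:: false] => Some (Some 0)
    | false :: true :: W => Some (tovP (sb W))
    | false :: false :: _ => None
    end
  end.

Lemma rev_cat_rev (W s : seq bool) : rev (rev W ++ s) = rev s ++ W.
Proof. by rewrite rev_cat revK. Qed.

Lemma fmap_pos W : fmap (hmid (rev W ++ [:: true; false])) = Some (tovP (sb W)).
Proof. by rewrite /fmap rev_cat_rev. Qed.

Lemma fmap_neg W : fmap (hmid (rev W ++ [:: true])) = Some (tovN (sb W)).
Proof. by rewrite /fmap rev_cat_rev. Qed.

Lemma ends_spec W : forall s x y L R, hends s = (x, y) ->
  ((( hends (rev W ++ s)).1 = x /\ (Efrom L R W).1 = L) \/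
     exists W', (hends (rev W ++ s)).1 = hmid (rev W' ++ s) /\ (Efrom L R W).1 = midp L R W') /\
  ((( hends (rev W ++ s)).2 = y /\ (Efrom L R W).2 = R) \/
     exists W', (hends (rev W ++ s)).2 = hmid (rev W' ++ s) /\ (Efrom L R W).2 = midp L R W').
Proof.
elim: W => [|c W IH] s x y L R hs.
  by rewrite /= hs; split; left.
have hs' : hends (c :: s) = (if c then (hmid s, y) else (x, hmid s)) by rewrite /= hs.
have -> : rev (c :: W) ++ s = rev W ++ (c :: s) by rewrite rev_cons -cats1 -catA.
case: c hs' => hs' /=.
- have [[[e1 e2]|[W' [e1 e2]]] [[e3 e4]|[W'' [e3 e4]]]] := IH _ _ _ (padd L R) R hs'.
  + split; [right; exists [::]; by rewrite e1 e2 | by left].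
  + split; [right; exists [::]; by rewrite e1 e2 | right; exists (true :: W''); by rewrite e3 e4 rev_cons -cats1 -catA].
  + split; [right; exists (true :: W'); by rewrite e1 e2 rev_cons -cats1 -catA | by left].
  + split; [right; exists (true :: W'); by rewrite e1 e2 rev_cons -cats1 -catA | right; exists (true :: W''); by rewrite e3 e4 rev_cons -cats1 -catA].
- have [[[e1 e2]|[W' [e1 e2]]] [[e3 e4]|[W'' [e3 e4]]]] := IH _ _ _ L (padd L R) hs'.
  + split; [by left | right; exists [::]; by rewrite e3 e4].
  + split; [by left | right; exists (false :: W''); by rewrite e3 e4 rev_cons -cats1 -catA].
  + split; [right; exists (false :: W'); by rewrite e1 e2 rev_cons -cats1 -catA | right; exists [::]; by rewrite e3 e4].
  + split; [right; exists (false :: W'); by rewrite e1 e2 rev_cons -cats1 -catA | right; exists (false :: W''); by rewrite e3 e4 rev_cons -cats1 -catA].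
Qed.


Lemma region_pos W :
  fmap (hends (rev W ++ [:: true; false])).1 = Some (tovP (Efrom (1, 0)%N (0, 1)%N W).1) /\
  fmap (hends (rev W ++ [:: true; false])).2 = Some (tovP (Efrom (1, 0)%N (0, 1)%N W).2).
Proof.
have hs : hends [:: true; false] = (hmid [:: false], hmid [::]) by [].
have [[[e1 e2]|[W' [e1 e2]]] [[e3 e4]|[W'' [e3 e4]]]] := ends_spec W (1, 0)%N (0, 1)%N hs.
all: rewrite ?e1 ?e2 ?e3 ?e4 ?midp_sb ?fmap_pos //.
all: try (by rewrite /tovP /= mul0r).
Qed.

Lemma region_neg W :
  fmap (hends (rev W ++ [:: true])).1 = Some (tovN (Efrom (1, 0)%N (0, 1)%N W).1) /\
  fmap (hends (rev W ++ [:: true])).2 = Some (tovN (Efrom (1, 0)%N (0, 1)%N W).2).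
Proof.
have hs : hends [:: true] = (hmid [::], hbase true) by [].
have [[[e1 e2]|[W' [e1 e2]]] [[e3 e4]|[W'' [e3 e4]]]] := ends_spec W (1, 0)%N (0, 1)%N hs.
all: rewrite ?e1 ?e2 ?e3 ?e4 ?midp_sb ?fmap_neg //.
all: try (by rewrite /tovN /= oppr0 mul0r).
Qed.

Definition Pc (h : option rat) : nat * nat :=
  match h with None => (0, 1)%N | Some r => (`|denq r|, `|numq r|)%N end.
Definition Nc (h : option rat) : nat * nat :=
  match h with None => (1, 0)%N | Some r => (`|numq r|, `|denq r|)%N end.
Definition posh (h : option rat) : Prop := if h is Some r then 0 <= r else True.
Definition negh (h : option rat) : Prop := if h is Some r then r <= 0 else True.

Lemma tovP_Pc h : posh h -> tovP (Pc h) = h.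
Proof.
case: h => [r|] //= hr; rewrite /tovP /=.
have -> : (`|denq r| == 0)%N = false by apply/negbTE; rewrite -lt0n absz_gt0 denq_neq0.
by rewrite !natr_absz !ger0_norm ?numq_ge0 ?divq_num_den // ltW.
Qed.

Lemma tovN_Nc h : negh h -> tovN (Nc h) = h.
Proof.
case: h => [r|] //= hr; rewrite /tovN /=.
have -> : (`|denq r| == 0)%N = false by apply/negbTE; rewrite -lt0n absz_gt0 denq_neq0.
rewrite !natr_absz (ger0_norm (ltW (denq_gt0 r))) ler0_norm ?numq_le0 //.
by rewrite rmorphN opprK divq_num_den.
Qed.

Lemma tovP_inv p r : (0 < p.1)%N -> (0 < p.2)%N -> coprime p.1 p.2 -> tovP p = Some r ->
  p = Pc (Some r) /\ 0 < r.
Proof.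
case: p => a b /= ha hb hc; rewrite /tovP /=.
have -> : (a == 0)%N = false by apply/negbTE; rewrite -lt0n.
move=> [<-].
have hc' : coprime `|(b%:Z)| `|(a%:Z)| by rewrite coprime_sym.
rewrite /Pc !pmulrn.
have hn := coprimeq_num hc'; have hd := coprimeq_den hc'.
rewrite gtr0_sg ?ltz_nat // mul1r in hn.
have ha' : (a%:Z == 0) = false by apply/negbTE; rewrite eqz_nat -lt0n.
rewrite ha' in hd.
rewrite hn hd; split => //.
by rewrite -numq_gt0 hn ltz_nat.
Qed.

Lemma tovN_inv p r : (0 < p.1)%N -> (0 < p.2)%N -> coprime p.1 p.2 -> tovN p = Some r ->
  p = Nc (Some r) /\ r < 0.
Proof.
case: p => a b /= ha hb hc; rewrite /tovN /=.
have -> : (b == 0)%N = false by apply/negbTE; rewrite -lt0n.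
move=> [<-].
have hc' : coprime `|(- a%:Z)| `|(b%:Z)| by rewrite abszN.
rewrite /Nc !pmulrn -mulrNz.
have hn := coprimeq_num hc'; have hd := coprimeq_den hc'.
rewrite gtr0_sg ?ltz_nat // mul1r in hn.
have hb' : (b%:Z == 0) = false by apply/negbTE; rewrite eqz_nat -lt0n.
rewrite hb' in hd.
rewrite hn hd abszN; split => //.
by rewrite -numq_lt0 hn oppr_lt0 ltz_nat.
Qed.

Lemma tovN_sb W : exists r, tovN (sb W) = Some r /\ sb W = Nc (Some r) /\ r < 0.
Proof.
have [p1 p2] := sb_pos W.
case T: (tovN (sb W)) => [r|]; last by rewrite /tovN (negbTE (lt0n_neq0 p2)) in T.
have [e1 e2] := tovN_inv p1 p2 (sb_coprime W) T.
by exists r.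
Qed.

Lemma tovP_sb W : exists r, tovP (sb W) = Some r /\ sb W = Pc (Some r) /\ 0 < r.
Proof.
have [p1 p2] := sb_pos W.
case T: (tovP (sb W)) => [r|]; last by rewrite /tovP (negbTE (lt0n_neq0 p1)) in T.
have [e1 e2] := tovP_inv p1 p2 (sb_coprime W) T.
by exists r.
Qed.

Lemma fiber_mid w h : fmap (hmid w) = Some h -> h <> Some 0 ->
  (h = None /\ w = [::]) \/
  (exists W r, [/\ w = rev W ++ [:: true], h = Some r, r < 0 & sb W = Nc h]) \/
  (exists W r, [/\ w = rev W ++ [:: true; false], h = Some r, 0 < r & sb W = Pc h]).
Proof.
move=> hf hne; have ew : w = rev (rev w) by rewrite revK.
move: hf; rewrite /fmap; case E: (rev w) => [|c W].
- by move=> [<-]; left; split => //; rewrite ew E.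
- case: c E => E.
  + have [r [T [e1 e2]]] := tovN_sb W.
    rewrite T => -[<-]; right; left; exists W, r; split => //.
    by rewrite ew E -[RHS]revK rev_cat_rev.
  + case: W E => [|c W] E; first by move=> [eh]; subst h.
    case: c E => E //.
    have [r [T [e1 e2]]] := tovP_sb W.
    rewrite T => -[<-]; right; right; exists W, r; split => //.
    by rewrite ew E -[RHS]revK rev_cat_rev.
Qed.

Lemma fiber_sub x y h : fmap x = Some h -> fmap y = Some h -> h <> Some 0 -> x = y.
Proof.
case: x => [bx|w] hx; first by move: hx => [<-].
case: y => [by'|w'] hy; first by move: hy => [<-].
move=> hne.
have [[e1 e2]|[[W [r [e1 e2 e3 e4]]]|[W [r [e1 e2 e3 e4]]]]] := fiber_mid hx hne;
have [[f1 f2]|[[W' [r' [f1 f2 f3 f4]]]|[W' [r' [f1 f2 f3 f4]]]]] := fiber_mid hy hne;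
  subst; try done.
- by move: f2 => [e]; subst r'; rewrite (sb_inj (etrans e4 (esym f4))).
- by move: f2 => [e]; subst r'; move: (lt_trans e3 f3); rewrite ltxx.
- by move: f2 => [e]; subst r'; move: (lt_trans e3 f3); rewrite ltxx.
- by move: f2 => [e]; subst r'; rewrite (sb_inj (etrans e4 (esym f4))).
Qed.

Lemma fiber_zero x : fmap x = Some (Some 0) ->
  x = hbase false \/ x = hbase true \/ x = hmid [:: false].
Proof.
case: x => [[]|w]; [by right; left | by left | ].
have ew : w = rev (rev w) by rewrite revK.
rewrite /fmap; case E: (rev w) => [|c W] //.
case: c E => E.
- have [r [T [e1 e2]]] := tovN_sb W.
  by rewrite T => -[er]; subst r; rewrite ltxx in e2.
- case: W E => [|c W] E; first by right; right; rewrite ew E.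
  case: c E => E //.
  have [r [T [e1 e2]]] := tovP_sb W.
  by rewrite T => -[er]; subst r; rewrite ltxx in e2.
Qed.


Lemma fiber_ne h : exists x, fmap x = Some h.
Proof.
case: h => [r|]; last by exists (hmid [::]).
case: (ltrgtP 0 r) => hr.
- have pd : (0 < `|denq r|)%N by rewrite absz_gt0 denq_neq0.
  have pn : (0 < `|numq r|)%N by rewrite absz_gt0 numq_eq0 (gt_eqF hr).
  have hc : coprime `|denq r| `|numq r| by rewrite coprime_sym coprime_num_den.
  have [W hW] := sb_surj (leqnn _) pd pn hc.
  exists (hmid (rev W ++ [:: true; false])); rewrite fmap_pos hW.
  by rewrite -[(_, _)]/(Pc (Some r)) tovP_Pc //= ltW.
- have pd : (0 < `|denq r|)%N by rewrite absz_gt0 denq_neq0.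
  have pn : (0 < `|numq r|)%N by rewrite absz_gt0 numq_eq0 (lt_eqF hr).
  have [W hW] := sb_surj (leqnn _) pn pd (coprime_num_den r).
  exists (hmid (rev W ++ [:: true])); rewrite fmap_neg hW.
  by rewrite -[(_, _)]/(Nc (Some r)) tovN_Nc //= ltW.
- by subst r; exists (hbase false).
Qed.

Definition cdet (p q : nat * nat) : int := ((p.2 * q.1)%N)%:Z - ((p.1 * q.2)%N)%:Z.

Lemma detP h h' : posh h -> posh h' -> farey_det h h' = cdet (Pc h) (Pc h').
Proof.
rewrite /cdet; case: h => [r|]; case: h' => [r'|] //= h1 h2;
  rewrite ?mul1n ?mul0n ?muln1 ?muln0 ?PoszM ?abszE ?ger0_norm ?numq_ge0 //=;
  rewrite ?subr0 ?sub0r ?(ltW (denq_gt0 _)) //.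
Qed.

Lemma detN h h' : negh h -> negh h' ->
  farey_det h h' = cdet (Nc h) (Nc h') \/ farey_det h h' = - cdet (Nc h) (Nc h').
Proof.
rewrite /cdet; case: h => [r|]; case: h' => [r'|] //= h1 h2;
  rewrite ?mul1n ?mul0n ?muln1 ?muln0 ?PoszM ?abszE ?(ger0_norm (ltW (denq_gt0 _))) //=;
  rewrite ?ler0_norm ?numq_le0 //; rewrite ?subr0 ?sub0r ?opprK.
- left; ring.
- by right.
- by right.
- by left.
Qed.

Lemma hadj_sym x y : hfarey_adj x y -> hfarey_adj y x.
Proof. by move=> [w [e|e]]; exists w; [right|left]. Qed.

Lemma edge_pos h h' : posh h -> posh h' ->
  ((Pc h).1 * (Pc h').2 = (Pc h).2 * (Pc h').1 + 1)%N ->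
  exists x y, [/\ fmap x = Some h, fmap y = Some h' & hfarey_adj x y].
Proof.
move=> p1 p2; case E1: (Pc h) => [a b]; case E2: (Pc h') => [c d] /= he.
have [W hW] := edge_exists (leqnn _) he.
have [f1 f2] := region_pos W.
exists (hends (rev W ++ [:: true; false])).1, (hends (rev W ++ [:: true; false])).2; split.
- by rewrite f1 hW /= -E1 tovP_Pc.
- by rewrite f2 hW /= -E2 tovP_Pc.
- by exists (rev W ++ [:: true; false]); left; case: (hends _).
Qed.

Lemma edge_neg h h' : negh h -> negh h' ->
  ((Nc h).1 * (Nc h').2 = (Nc h).2 * (Nc h').1 + 1)%N ->
  exists x y, [/\ fmap x = Some h, fmap y = Some h' & hfarey_adj x y].
Proof.
move=> p1 p2; case E1: (Nc h) => [a b]; case E2: (Nc h') => [c d] /= he.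
have [W hW] := edge_exists (leqnn _) he.
have [f1 f2] := region_neg W.
exists (hends (rev W ++ [:: true])).1, (hends (rev W ++ [:: true])).2; split.
- by rewrite f1 hW /= -E1 tovN_Nc.
- by rewrite f2 hW /= -E2 tovN_Nc.
- by exists (rev W ++ [:: true]); left; case: (hends _).
Qed.

Lemma cdet_cases p q : cdet p q = 1 \/ cdet p q = -1 ->
  (p.1 * q.2 = p.2 * q.1 + 1)%N \/ (q.1 * p.2 = q.2 * p.1 + 1)%N.
Proof. case: p q => [a b] [c d]; rewrite /cdet /= => -[h|h]; [right|left]; lia. Qed.

Lemma adj_pos h h' : posh h -> posh h' -> farey_adj h h' ->
  exists x y, [/\ fmap x = Some h, fmap y = Some h' & hfarey_adj x y].
Proof.
move=> p1 p2; rewrite /farey_adj detP // => /cdet_cases [e|e].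
- exact: edge_pos.
- have [x [y [f1 f2 a]]] := edge_pos p2 p1 e.
  by exists y, x; split => //; apply: hadj_sym.
Qed.

Lemma adj_neg h h' : negh h -> negh h' -> farey_adj h h' ->
  exists x y, [/\ fmap x = Some h, fmap y = Some h' & hfarey_adj x y].
Proof.
move=> p1 p2 hf.
have hc : cdet (Nc h) (Nc h') = 1 \/ cdet (Nc h) (Nc h') = -1.
  move: hf; rewrite /farey_adj; case: (detN p1 p2) => ->.
  - by [].
  - by move=> [e|e]; [right|left]; rewrite -[LHS]opprK e.
case/cdet_cases: hc => e.
- exact: edge_neg.
- have [x [y [f1 f2 a]]] := edge_neg p2 p1 e.
  by exists y, x; split => //; apply: hadj_sym.
Qed.

Lemma mixed r r' : 0 < r -> r' < 0 -> ~ farey_adj (Some r) (Some r').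
Proof.
move=> h1 h2; rewrite /farey_adj /=.
have := numq_gt0 r; rewrite h1 => n1.
have := numq_lt0 r'; rewrite h2 => n2.
have d1 := denq_gt0 r; have d2 := denq_gt0 r'.
move: n1 n2 d1 d2; set n := numq r; set n' := numq r'; set d := denq r; set d' := denq r'.
move=> n1 n2 d1 d2 hh; nia.
Qed.


Lemma mixed2 r r' : r < 0 -> 0 < r' -> ~ farey_adj (Some r) (Some r').
Proof.
move=> h1 h2; rewrite /farey_adj /=.
have := numq_lt0 r; rewrite h1 => n1.
have := numq_gt0 r'; rewrite h2 => n2.
have d1 := denq_gt0 r; have d2 := denq_gt0 r'.
move: n1 n2 d1 d2; set n := numq r; set n' := numq r'; set d := denq r; set d' := denq r'.
move=> n1 n2 d1 d2 hh; nia.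
Qed.

Lemma walk_trans (V : Type) (adj : V -> V -> Prop) (B : V -> Prop) x y z :
  walk_in adj B x y -> walk_in adj B y z -> walk_in adj B x z.
Proof.
elim=> [u _ //|u v w hu huv _ IH] hz.
exact: (walk_step hu huv (IH hz)).
Qed.

Theorem lemma2p1 : minor_finite_branch farey_adj hfarey_adj.
Proof.
exists (fun h x => fmap x = Some h); split.
- exact: fiber_ne.
- move=> h; case: (eqVneq h (Some 0)) => [->|hne].
  + exists [:: hbase false; hbase true; hmid [:: false]] => x /fiber_zero.
    by move=> [->|[->|->]] /=; tauto.
  + have [x0 hx0] := fiber_ne h.
    by exists [:: x0] => x hx; simpl; left; exact: (fiber_sub hx0 hx (elimN eqP hne)).
- move=> h h' x ne e1 e2; apply: ne; rewrite e1 in e2; by case: e2.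
- move=> h; case: (eqVneq h (Some 0)) => [->|hne].
  + set B := (fun x => fmap x = Some (Some 0)).
    have Ba : B (hbase false) by [].
    have Bb : B (hbase true) by [].
    have Bu : B (hmid [:: false]) by [].
    have ab : hfarey_adj (hbase false) (hbase true) by exists [::]; left.
    have au : hfarey_adj (hbase false) (hmid [:: false]) by exists [:: false; false]; left.
    have toa : forall z, B z -> walk_in hfarey_adj B z (hbase false).
      move=> z /fiber_zero [->|[->|->]].
      * exact: walk_refl.
      * exact: (walk_step Bb (hadj_sym ab) (walk_refl _ Ba)).
      * exact: (walk_step Bu (hadj_sym au) (walk_refl _ Ba)).
    have froma : forall z, B z -> walk_in hfarey_adj B (hbase false) z.
      move=> z /fiber_zero [->|[->|->]].
      * exact: walk_refl.
      * exact: (walk_step Ba ab (walk_refl _ Bb)).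
      * exact: (walk_step Ba au (walk_refl _ Bu)).
    move=> x y hx hy; exact: walk_trans (toa x hx) (froma y hy).
  + move=> x y hx hy; have e := fiber_sub hx hy (elimN eqP hne); subst y; exact: walk_refl.
- move=> h h'.
  case: h => [r|]; case: h' => [r'|] hadj.
  + case: (lerP 0 r) => hr; case: (lerP 0 r') => hr'.
    * exact: (adj_pos (h := Some r) (h' := Some r') hr hr' hadj).
    * case: (lerP r 0) => hr0; first exact: (adj_neg (h := Some r) (h' := Some r') hr0 (ltW hr') hadj).
      by have := mixed hr0 hr'.
    * case: (lerP r' 0) => hr0; first exact: (adj_neg (h := Some r) (h' := Some r') (ltW hr) hr0 hadj).
      by have := mixed2 hr hr0.
    * exact: (adj_neg (h := Some r) (h' := Some r') (ltW hr) (ltW hr') hadj).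
  + case: (lerP 0 r) => hr; first exact: (adj_pos (h := Some r) (h' := None) hr I hadj).
    exact: (adj_neg (h := Some r) (h' := None) (ltW hr) I hadj).
  + case: (lerP 0 r') => hr; first exact: (adj_pos (h := None) (h' := Some r') I hr hadj).
    exact: (adj_neg (h := None) (h' := Some r') I (ltW hr) hadj).
  + by case: hadj.
Qed.
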